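(* Let $\mathbb{F}$ be a field with $\mathrm{char}(\mathbb{F})\neq 2,3$. Let $I$ be a non-zero ideal of $\hat{\mathcal{H}}$ contained in $J$, and let $x$ be a non-zero element of $I$ of minimal $J$-degree, with $p$-level $3k$. Then $I$ has codimension $2(k-1)$ in $J$.
   Context: Notation: $\mathbb{N}=\{1,2,3,\dots\}$, $3\mathbb{N}=\{3,6,9,\dots\}$; for $r\in\mathbb{Z}$, $\bar r=r+3\mathbb{Z}\in\mathbb{Z}_3$. The algebra $\hat{\mathcal{H}}$ is the commutative $\mathbb{F}$-algebra with basis $\{a_i:i\in\mathbb{Z}\}\cup\{s_j:j\in\mathbb{N}\}\cup\{p_{\bar r,k}:\bar r\in\{\bar1,\bar2\},\ k\in 3\mathbb{N}\}$, where $s_0=0$, $p_{\bar r,j}=0$ for all $\bar r$ whenever $j\notin 3\mathbb{N}$, $p_{\bar 0,j}=-p_{\bar1,j}-p_{\bar2,j}$, $z_{\bar r,j}=p_{\bar r+\bar1,j}-p_{\bar r-\bar1,j}$, and for $i,i'\in\mathbb{Z}$, $j,l\in\mathbb{N}$, $h,k\in3\mathbb{N}$, $\bar r,\bar t\in\mathbb{Z}_3$: (H1) $a_ia_{i'}=\tfrac12(a_i+a_{i'})+s_{|i-i'|}+z_{\bar\imath,|i-i'|}$; (H2) $a_is_j=-\tfrac34a_i+\tfrac38(a_{i-j}+a_{i+j})+\tfrac32 s_j-z_{\bar\imath,j}$; (H3) $a_ip_{\bar r,k}=\tfrac32p_{\bar r,k}-p_{-(\bar\imath+\bar r),k}$;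 (H4) $s_js_l=\tfrac34(s_j+s_l)-\tfrac38(s_{|j-l|}+s_{j+l})$; (H5) $s_jp_{\bar r,k}=\tfrac34(p_{\bar r,j}+p_{\bar r,k})-\tfrac38(p_{\bar r,|j-k|}+p_{\bar r,j+k})$; (H6) $p_{\bar r,h}p_{\bar t,k}=\tfrac14(z_{-(\bar r+\bar t),h}+z_{-(\bar r+\bar t),k})-\tfrac18(z_{-(\bar r+\bar t),|h-k|}+z_{-(\bar r+\bar t),h+k})$. $J=\langle p_{\bar1,j},p_{\bar2,j}:j\in3\mathbb{N}\rangle$ (an ideal). Every non-zero $x\in J$ is uniquely $x=\sum_{j\in3\mathbb{N},\,j\le 3m}\sum_{\bar r\in\{\bar1,\bar2\}}\beta_{\bar r,j}p_{\bar r,j}$ with $\beta_{\bar r,3m}\neq0$ for some $\bar r$; its $p$-level is $3m$ and its $J$-degree is $3m+\sum_{r\in\{1,2\},\ \beta_{\bar r,3m}\neq0}\tfrac r4$. *)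

(* Defs.v *)
(* The algebra \hat{H} is modelled as the free F-vector space
   {malg F[hbasis]} (finitely supported functions hbasis -> F, multinomials'
   monalg) on the index set of its basis, with the bilinear extension of the
   product table (H1)-(H6). *)
From HB Require Import structures.
From mathcomp Require Import all_boot all_order all_algebra.
From mathcomp Require Import finmap.
From mathcomp Require Import monalg.
Set Implicit Arguments. Unset Strict Implicit. Unset Printing Implicit Defensive.
Import Order.TTheory GRing.Theory Num.Theory.

(* Basis index set:
     HA i     <->  a_i              (i : int)
     HS j     <->  s_{j+1}          (so j+1 ranges over N = {1,2,...})
     HP b m   <->  p_{r, 3(m+1)}    with r = 1 if b = false, r = 2 if b = true *)
Inductive hbasis : Type :=
| HA of int
| HS of nat
| HP of bool & nat.

Definition hb_enc (b : hbasis) : (int + nat) + (bool * nat) :=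
  match b with
  | HA i => inl (inl i)
  | HS j => inl (inr j)
  | HP r m => inr (r, m)
  end.
Definition hb_dec (c : (int + nat) + (bool * nat)) : hbasis :=
  match c with
  | inl (inl i) => HA i
  | inl (inr j) => HS j
  | inr (r, m) => HP r m
  end.
Lemma hb_encK : cancel hb_enc hb_dec. Proof. by case. Qed.
HB.instance Definition _ := Equality.copy hbasis (can_type hb_encK).
HB.instance Definition _ := Choice.copy hbasis (can_type hb_encK).
HB.instance Definition _ := Countable.copy hbasis (can_type hb_encK).

Local Open Scope ring_scope.

Section Hhat.
Variable F : fieldType.

Definition Hhat := {malg F[hbasis]}.

Definition hvec (b : hbasis) : Hhat := << (1 : F) *g b >>.

Definition ha (i : int) : Hhat := hvec (HA i).

(* s_j for j : nat, with the convention s_0 = 0 *)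
Definition hs (j : nat) : Hhat := if j is j'.+1 then hvec (HS j') else 0.

(* p_{r̄, j} for r : int (read modulo 3) and j : nat, with the conventions
   p_{r̄,j} = 0 if j ∉ 3N, and p_{0̄,j} = - p_{1̄,j} - p_{2̄,j}. *)
Definition hp (r : int) (j : nat) : Hhat :=
  if (0 < j)%N && (3 %| j)%N then
    let m := (j %/ 3).-1 in
    if (r %% 3)%Z == 1 then hvec (HP false m)
    else if (r %% 3)%Z == 2 then hvec (HP true m)
    else - hvec (HP false m) - hvec (HP true m)
  else 0.

Definition hz (r : int) (j : nat) : Hhat := hp (r + 1) j - hp (r - 1) j.

Definition bmul (b c : hbasis) : Hhat :=
  match b, c with
  | HA i, HA i' =>
      2^-1 *: (ha i + ha i') + hs `|i - i'|%N + hz i `|i - i'|%N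
  | HA i, HS j' | HS j', HA i =>
      let j := j'.+1 in
      (- (3 / 4)) *: ha i + (3 / 8) *: (ha (i - j%:Z) + ha (i + j%:Z))
        + (3 / 2) *: hs j - hz i j
  | HA i, HP b m | HP b m, HA i =>
      let r : int := if b then 2 else 1 in
      let k := (3 * m.+1)%N in
      (3 / 2) *: hp r k - hp (- (i + r)) k
  | HS j', HS l' =>
      let j := j'.+1 in let l := l'.+1 in
      (3 / 4) *: (hs j + hs l) - (3 / 8) *: (hs `|j - l|%N + hs (j + l))
  | HS j', HP b m | HP b m, HS j' =>
      let j := j'.+1 in
      let r : int := if b then 2 else 1 in
      let k := (3 * m.+1)%N in
      (3 / 4) *: (hp r j + hp r k) - (3 / 8) *: (hp r `|j - k|%N + hp r (j + k))
  | HP b m, HP b' m' =>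
      let r : int := if b then 2 else 1 in
      let t : int := if b' then 2 else 1 in
      let h := (3 * m.+1)%N in let k := (3 * m'.+1)%N in
      4^-1 *: (hz (- (r + t)) h + hz (- (r + t)) k)
        - 8^-1 *: (hz (- (r + t)) `|h - k|%N + hz (- (r + t)) (h + k))
  end.

Definition hmul (x y : Hhat) : Hhat :=
  \sum_(b <- msupp x) \sum_(c <- msupp y) (x@_b * y@_c) *: bmul b c.

Definition is_hp (b : hbasis) : bool := if b is HP _ _ then true else false.

(* membership in J = span{ p_{1̄,j}, p_{2̄,j} : j ∈ 3N } *)
Definition inJ (x : Hhat) : Prop := forall b, ~~ is_hp b -> x@_b = 0.

Definition is_ideal (I : Hhat -> Prop) : Prop :=
  [/\ I 0,
      (forall x y, I x -> I y -> I (x + y)),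
      (forall (c : F) x, I x -> I (c *: x)) &
      (forall h x, I x -> I (hmul h x))].

(* coefficient beta_{r̄, j} of x on p_{r̄,j}, r : bool (false = 1̄, true = 2̄) *)
Definition pcoef (x : Hhat) (r : bool) (j : nat) : F :=
  if (0 < j)%N && (3 %| j)%N then x@_(HP r (j %/ 3).-1) else 0.

Definition blevel (b : hbasis) : nat := if b is HP _ m then (3 * m.+1)%N else 0%N.

Definition plevel (x : Hhat) : nat := \max_(b <- msupp x) blevel b.

Definition jdegree (x : Hhat) : rat :=
  (plevel x)%:R
  + (if pcoef x false (plevel x) != 0 then 1 / 4 else 0)
  + (if pcoef x true (plevel x) != 0 then 2 / 4 else 0).

(* I ⊆ J has codimension n in J: dim (J / I) = n, witnessed by n elements of J
   which are linearly independent modulo I and span J modulo I. *)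
Definition codim_in_J (I : Hhat -> Prop) (n : nat) : Prop :=
  exists v : 'I_n -> Hhat,
    [/\ (forall i, inJ (v i)),
        (forall c : 'I_n -> F, I (\sum_i c i *: v i) -> forall i, c i = 0) &
        (forall y, inJ y -> exists c : 'I_n -> F, I (y - \sum_i c i *: v i))].

End Hhat.

(* Main.v *)
Require Import Defs.
From HB Require Import structures.
From mathcomp Require Import all_boot all_order all_algebra.
From mathcomp Require Import finmap.
From mathcomp Require Import monalg.
From mathcomp Require Import zify ring lra.
Import GRing.Theory Num.Theory.
Local Open Scope ring_scope.

Ltac coefring := apply/malgP => ?; rewrite ?(mcoeffD, mcoeffB, mcoeffN, mcoeffZ, mcoeff0); ring.

Section HProofA.
Variable F : fieldType.
Local Notation H := (Hhat F).
Local Notation P b m := (hvec F (HP b m)).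

Lemma hmulw (h y : H) (d : {fset hbasis}) : (msupp y `<=` d)%fset ->
  hmul h y = \sum_(b <- msupp h) \sum_(c <- d) (h@_b * y@_c) *: bmul F b c.
Proof.
move=> le; rewrite /hmul; apply: eq_bigr => b _.
apply: big_fset_incl => // c _ /mcoeff_outdom ->.
by rewrite mulr0 scale0r.
Qed.

Lemma hmulDZ (h y z : H) (a : F) : hmul h (a *: y + z) = a *: hmul h y + hmul h z.
Proof.
have l1 : (msupp y `<=` msupp y `|` msupp z)%fset by apply: fsubsetUl.
have l2 : (msupp z `<=` msupp y `|` msupp z)%fset by apply: fsubsetUr.
have l3 : (msupp (a *: y + z) `<=` msupp y `|` msupp z)%fset.
  apply: fsubset_trans (msuppD_le _ _) _.
  by apply: fsetUSS => //; apply: msuppZ_le.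
rewrite (hmulw h _ _ l1) (hmulw h _ _ l2) (hmulw h _ _ l3) scaler_sumr -big_split /=.
apply: eq_bigr => b _; rewrite scaler_sumr -big_split /=; apply: eq_bigr => c _.
by rewrite mcoeffD mcoeffZ scalerA -scalerDl; congr (_ *: _); ring.
Qed.

Lemma hmulD (h y z : H) : hmul h (y + z) = hmul h y + hmul h z.
Proof. by have := hmulDZ h y z 1; rewrite !scale1r. Qed.
Lemma hmul0 (h : H) : hmul h 0 = 0.
Proof. by rewrite /hmul msupp0; apply: big1 => b _; rewrite big_seq_fset0. Qed.
Lemma hmulZ (h y : H) a : hmul h (a *: y) = a *: hmul h y.
Proof. by rewrite -[a *: y]addr0 hmulDZ hmul0 addr0. Qed.

Lemma msupp_hvec b : msupp (hvec F b) = [fset b]%fset.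
Proof. by rewrite /hvec msuppU oner_eq0. Qed.

Lemma hmul_hvec a c : hmul (hvec F a) (hvec F c) = bmul F a c.
Proof.
by rewrite /hmul !msupp_hvec !big_seq_fset1 /hvec !mcoeffUU mulr1 scale1r.
Qed.

Lemma mcoeff_hvec b c : (hvec F b)@_c = (b == c)%:R.
Proof. by rewrite /hvec mcoeffU. Qed.

Lemma malgU_hvec (a : F) b : << a *g b >> = a *: hvec F b.
Proof.
by apply/malgP => c; rewrite mcoeffZ mcoeff_hvec mcoeffU mulr_natr.
Qed.

Lemma hexp (y : H) : y = \sum_(c <- msupp y) y@_c *: hvec F c.
Proof.
by rewrite {1}(monalgE y); apply: eq_bigr => c _; rewrite malgU_hvec.
Qed.


Definition lowb (m : nat) (b : hbasis) : bool :=
  if b is HP _ m' then (m' < m)%N else false.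
Definition low m (y : H) := forall b, ~~ lowb m b -> y@_b = 0.

Lemma low0 m : low m 0.
Proof. by move=> b _; rewrite mcoeff0. Qed.
Lemma lowD m y z : low m y -> low m z -> low m (y + z).
Proof. by move=> ly lz b hb; rewrite mcoeffD ly ?lz ?addr0. Qed.
Lemma lowZ m a y : low m y -> low m (a *: y).
Proof. by move=> ly b hb; rewrite mcoeffZ ly ?mulr0. Qed.
Lemma lowN m y : low m y -> low m (- y).
Proof. by move=> ly b hb; rewrite mcoeffN ly ?oppr0. Qed.
Lemma lowB m y z : low m y -> low m z -> low m (y - z).
Proof. by move=> ly lz; apply: lowD; [exact: ly | exact: lowN]. Qed.
Lemma low_mono m n y : (m <= n)%N -> low m y -> low n y.
Proof.
move=> mn ly b hb; apply: ly; move: hb; case: b => //= _ m'.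
by apply: contra => h; apply: leq_trans h mn.
Qed.
Lemma low_hvec m b : lowb m b -> low m (hvec F b).
Proof.
move=> hb c hc; rewrite mcoeff_hvec; case: eqP => // e.
by rewrite -e hb in hc.
Qed.
Lemma low_inJ m y : low m y -> inJ y.
Proof. by move=> ly b hb; apply: ly; case: b hb. Qed.

Lemma hp_low m r j : (j <= 3 * m)%N -> low m (hp F r j).
Proof.
rewrite /hp; case: ifP => [/andP[j0 dj] jm|]; last by move=> _ _; exact: low0.
have hm : ((j %/ 3).-1 < m)%N by lia.
have l1 : low m (P false (j %/ 3).-1) by apply: low_hvec.
have l2 : low m (P true (j %/ 3).-1) by apply: low_hvec.
case: ifP => _ //; case: ifP => _ //.
by apply: lowB => //; apply: lowN.
Qed.

Lemma f0_of (f : H -> H) : (forall a y z, f (a *: y + z) = a *: f y + f z) -> f 0 = 0.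
Proof.
move=> fl; have := fl 1 0 0; rewrite scaler0 addr0 scale1r => e.
by apply: (addrI (f 0)); rewrite addr0 -e.
Qed.

Lemma low_lin_seq (f : H -> H) d (s : seq hbasis) (cf : hbasis -> F) :
  (forall a y z, f (a *: y + z) = a *: f y + f z) ->
  (forall c, c \in s -> low d (f (hvec F c))) ->
  low d (f (\sum_(c <- s) cf c *: hvec F c)).
Proof.
move=> fl; elim: s => [|c s IH] hs; first by rewrite big_nil (f0_of _ fl); exact: low0.
rewrite big_cons fl; apply: lowD; first by apply: lowZ; apply: hs; rewrite mem_head.
by apply: IH => c' c's; apply: hs; rewrite inE c's orbT.
Qed.

Lemma low_lin (f : H -> H) m d :
  (forall a y z, f (a *: y + z) = a *: f y + f z) ->
  (forall b m', (m' < m)%N -> low d (f (P b m'))) ->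
  forall y, low m y -> low d (f y).
Proof.
move=> fl hb y ly; rewrite (hexp y); apply: low_lin_seq => // c cin.
have : lowb m c.
  apply/negPn/negP => nc; move: cin; by rewrite -mcoeff_neq0 (ly c nc) eqxx.
by case: c {cin} => //= b m' h; apply: hb.
Qed.



Lemma hp_eval r m : hp F r (3 * m.+1) =
  if (r %% 3)%Z == 1 then P false m else if (r %% 3)%Z == 2 then P true m
  else - P false m - P true m.
Proof.
rewrite /hp; have -> : ((0 < 3 * m.+1) && (3 %| 3 * m.+1))%N = true.
  by apply/andP; split; [|apply: dvdn_mulr].
by rewrite mulKn.
Qed.

Lemma hp_top b m : hp F (if b then 2 else 1) (3 * m.+1) = P b m.
Proof. by rewrite hp_eval; case: b. Qed.

Definition S i (y : H) := (3 / 2) *: y - hmul (ha F i) y.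
Definition T (y : H) := hmul (hs F 3) y.

Lemma S_lin i a y z : S i (a *: y + z) = a *: S i y + S i z.
Proof. rewrite /S hmulDZ; coefring. Qed.
Lemma T_lin a y z : T (a *: y + z) = a *: T y + T z.
Proof. by rewrite /T hmulDZ. Qed.

Lemma S_P i b m : S i (P b m) = hp F (- (i + if b then 2 else 1)) (3 * m.+1).
Proof.
rewrite /S /ha hmul_hvec /= hp_top; coefring.
Qed.


Lemma T_P b m : low m.+1 (T (P b m) + (3 / 8) *: P b m.+1).
Proof.
rewrite /T /hs hmul_hvec /=.
have -> : (3 + 3 * m.+1 = 3 * m.+2)%N by lia.
rewrite (hp_top b m.+1).
set r : int := if b then 2 else 1.
set A := hp F r `|3 - 3 * m.+1|.
have -> : (3 / 4) *: (hp F r 3 + hp F r (3 * m.+1)) - (3 / 8) *: (A + P b m.+1)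
   + (3 / 8) *: P b m.+1 = (3 / 4) *: (hp F r 3 + hp F r (3 * m.+1)) - (3 / 8) *: A.
  by coefring.
apply: lowB; apply: lowZ; last by apply: hp_low; lia.
by apply: lowD; apply: hp_low; lia.
Qed.


End HProofA.

Section B.
Variable F : fieldType.
Local Notation P b m := (hvec F (HP b m)).

Lemma hp1 r m : (r %% 3)%Z = 1 -> hp F r (3 * m.+1) = P false m.
Proof. by move=> e; rewrite hp_eval e eqxx. Qed.
Lemma hp2 r m : (r %% 3)%Z = 2 -> hp F r (3 * m.+1) = P true m.
Proof.
move=> e; rewrite hp_eval e.
have -> : (2 == 1 :> int) = false by vm_compute.
by rewrite eqxx.
Qed.
Lemma hp0 r m : (r %% 3)%Z = 0 -> hp F r (3 * m.+1) = - P false m - P true m.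
Proof.
move=> e; rewrite hp_eval e.
have -> : (0 == 1 :> int) = false by vm_compute.
by have -> : (0 == 2 :> int) = false by vm_compute.
Qed.

Lemma S1F m : S F 1 (P false m) = P false m.
Proof. by rewrite S_P hp1 //; vm_compute. Qed.
Lemma S1T m : S F 1 (P true m) = - P false m - P true m.
Proof. by rewrite S_P hp0 //; vm_compute. Qed.
Lemma S2F m : S F 2 (P false m) = - P false m - P true m.
Proof. by rewrite S_P hp0 //; vm_compute. Qed.
Lemma S2T m : S F 2 (P true m) = P true m.
Proof. by rewrite S_P hp2 //; vm_compute. Qed.
Lemma S0F m : S F 0 (P false m) = P true m.
Proof. by rewrite S_P hp2 //; vm_compute. Qed.
Lemma S0T m : S F 0 (P true m) = P false m.
Proof. by rewrite S_P hp1 //; vm_compute. Qed.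

Lemma S_low i m y : low F m y -> low F m (S F i y).
Proof.
apply: low_lin; first exact: S_lin.
by move=> b m' hm; rewrite S_P; apply: hp_low; rewrite leq_pmul2l.
Qed.


Lemma T_low m y : low F m y -> low F m.+1 (T F y).
Proof.
apply: low_lin; first exact: T_lin.
move=> b m' hm.
have -> : T F (P b m') = (T F (P b m') + (3 / 8) *: P b m'.+1) - (3 / 8) *: P b m'.+1.
  by rewrite addrK.
apply: (@low_mono _ m'.+2); first exact: hm.
apply: lowB; first by apply: (@low_mono _ m'.+1); [exact: leqnSn | exact: (T_P F b m')].
apply: lowZ; apply: low_hvec; exact: ltnSn.
Qed.
End B.

Section C.
Variable F : fieldType.
Local Notation H := (Hhat F).
Local Notation P b m := (hvec F (HP b m)).

Lemma eqHP b m c : (HP b m == c) = if c is HP b' m' then (b == b') && (m == m') else false.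
Proof.
case: c => [i|j|b' m'] //=.
Qed.

Lemma low_split m (y : H) : low F m.+1 y ->
  low F m (y - y@_(HP false m) *: P false m - y@_(HP true m) *: P true m).
Proof.
move=> ly c hc; rewrite !mcoeffB !mcoeffZ !mcoeff_hvec !eqHP.
case: c hc => [i|j|b m'] /= hc; try by rewrite ly // !mulr0 !subr0.
rewrite -leqNgt in hc.
case: (ltngtP m' m) hc => [//|lt _|<- _].
  by rewrite ly /= -?leqNgt // !andbF !mulr0 !subr0.
by case: b; rewrite !eqxx /= ?mulr1 ?mulr0 ?subr0 ?subrr ?sub0r.
Qed.

Lemma low_of_plevel m (y : H) : inJ y -> (plevel y <= 3 * m)%N -> low F m y.
Proof.
move=> Jy hpl c; case: c => [i|j|b m'] /= hc; try by apply: Jy.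
apply/eqP; rewrite mcoeff_eq0; apply/negP => cin.
have h : (blevel (HP b m') <= plevel y)%N by apply: leq_bigmax_seq.
move: (leq_trans h hpl); rewrite /= leq_pmul2l //.
by move=> h2; rewrite h2 in hc.
Qed.

Lemma plevel_of_low m (y : H) : low F m y -> (plevel y <= 3 * m)%N.
Proof.
move=> ly; apply/bigmax_leqP_seq => c cin _.
have : lowb m c.
  apply/negPn/negP => nc; move: cin; by rewrite -mcoeff_neq0 (ly c nc) eqxx.
by case: c {cin} => //= b m' h; rewrite leq_pmul2l.
Qed.

Lemma low0_eq0 (y : H) : low F 0 y -> y = 0.
Proof. by move=> ly; apply/malgP => c; rewrite mcoeff0 ly //; case: c. Qed.

Lemma top_scale (c : F) (u p w : H) : c != 0 -> u = c *: p + w -> c^-1 *: u - p = c^-1 *: w.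
Proof.
move=> c0 ->; rewrite scalerDr scalerA mulVf // scale1r.
by rewrite addrAC subrr add0r.
Qed.

Lemma linB (f : H -> H) : (forall a y z, f (a *: y + z) = a *: f y + f z) ->
  forall y z, f (y - z) = f y - f z.
Proof.
move=> fl y z; rewrite addrC -scaleN1r fl scaleN1r addrC //.
Qed.

Lemma jdeg_bounds (y : H) :
  ((plevel y)%:R <= jdegree y)%R /\ (jdegree y <= (plevel y)%:R + 3 / 4)%R.
Proof.
rewrite /jdegree; case: ifP => _; case: ifP => _; split; lra.
Qed.

End C.

Theorem corollary7p3 (F : fieldType) (char2 : (2 \notin [pchar F])%N)
  (char3 : (3 \notin [pchar F])%N)
  (I : Hhat F -> Prop) (hI : is_ideal I) (I_nz : exists y, I y /\ y <> 0)
  (IJ : forall y, I y -> inJ y)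
  (x : Hhat F) (Ix : I x) (x_nz : x <> 0)
  (xmin : forall y, I y -> y <> 0 -> (jdegree x <= jdegree y)%R)
  (k : nat) (xlev : plevel x = (3 * k)%N) :
  codim_in_J I (2 * (k - 1))%N.
Proof.
have n3 : (3%:R : F) != 0 by move: char3; rewrite inE.
have n2 : (2%:R : F) != 0 by move: char2; rewrite inE.
case: hI => I0 ID IZ IM.
have IB : forall y z, I y -> I z -> I (y - z).
  by move=> y z Iy Iz; apply: ID => //; rewrite -scaleN1r; apply: IZ.
have IS : forall i y, I y -> I (S F i y).
  by move=> i y Iy; apply: IB; [apply: IZ | apply: IM].
have IT : forall y, I y -> I (T F y) by move=> y Iy; apply: IM.
have Jx := IJ x Ix.
case: k xlev => [|K] xlev.
  by case: x_nz; apply: low0_eq0; apply: low_of_plevel => //; rewrite xlev.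
have -> : (K.+1 - 1 = K)%N by rewrite subn1.
have lx : low F K.+1 x by apply: low_of_plevel => //; rewrite xlev.
set al := x@_(HP false K); set be := x@_(HP true K).
set z := x - al *: hvec F (HP false K) - be *: hvec F (HP true K).
have lz : low F K z by apply: low_split.
have ex : x = al *: hvec F (HP false K) + (be *: hvec F (HP true K) + z).
  by rewrite /z; coefring.
have ab : (al != 0) || (be != 0).
  apply/negPn/negP => /norP [/negPn/eqP a0 /negPn/eqP b0].
  have : low F K x by rewrite ex a0 b0 !scale0r !add0r.
  move/plevel_of_low; rewrite xlev leq_pmul2l // ltnn //.
have S0top : forall g b', I g -> low F K (g - hvec F (HP b' K)) ->
    I (S F 0 g) /\ low F K (S F 0 g - hvec F (HP (~~ b') K)).
  move=> g b' Ig lg; split; first exact: IS.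
  have -> : S F 0 g - hvec F (HP (~~ b') K) = S F 0 (g - hvec F (HP b' K)).
    by rewrite (linB F (S F 0) (S_lin F 0)); case: (b'); rewrite ?S0F ?S0T.
  exact: S_low.
have top : exists g0 g1, [/\ I g0, low F K (g0 - hvec F (HP false K)),
    I g1 & low F K (g1 - hvec F (HP true K))].
  case: (boolP (2%:R * al - be == 0)) => h1.
    case: (boolP (2%:R * be - al == 0)) => h2.
      exfalso.
      have e : 3%:R * al = 2%:R * (2%:R * al - be) + (2%:R * be - al) by ring.
      rewrite (eqP h1) (eqP h2) mulr0 addr0 in e.
      move/eqP: e; rewrite mulf_eq0 (negbTE n3) /= => /eqP a0.
      move: h1; rewrite a0 mulr0 sub0r oppr_eq0 => /eqP b0.
      by move: ab; rewrite a0 b0 eqxx.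
    set u := x + S F 2 x.
    have eS : S F 2 x = al *: S F 2 (hvec F (HP false K)) +
        (be *: S F 2 (hvec F (HP true K)) + S F 2 z) by rewrite {1}ex !S_lin.
    rewrite S2F S2T in eS.
    have eu : u = (2%:R * be - al) *: hvec F (HP true K) + (z + S F 2 z).
      by rewrite /u eS {1}ex; coefring.
    have Iu : I u by apply: ID => //; apply: IS.
    have [I1 l1] : I ((2%:R * be - al)^-1 *: u) /\
        low F K ((2%:R * be - al)^-1 *: u - hvec F (HP true K)).
      split; first exact: IZ.
      rewrite (top_scale F _ _ _ _ h2 eu); apply: lowZ; apply: lowD => //.
      exact: S_low.
    have [I0' l0] := S0top _ _ I1 l1.
    by exists (S F 0 ((2%:R * be - al)^-1 *: u)), ((2%:R * be - al)^-1 *: u).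
  set u := x + S F 1 x.
  have eS : S F 1 x = al *: S F 1 (hvec F (HP false K)) +
      (be *: S F 1 (hvec F (HP true K)) + S F 1 z) by rewrite {1}ex !S_lin.
  rewrite S1F S1T in eS.
  have eu : u = (2%:R * al - be) *: hvec F (HP false K) + (z + S F 1 z).
    by rewrite /u eS {1}ex; coefring.
  have Iu : I u by apply: ID => //; apply: IS.
  have [I1 l1] : I ((2%:R * al - be)^-1 *: u) /\
      low F K ((2%:R * al - be)^-1 *: u - hvec F (HP false K)).
    split; first exact: IZ.
    rewrite (top_scale F _ _ _ _ h1 eu); apply: lowZ; apply: lowD => //.
    exact: S_low.
  have [I0' l0] := S0top _ _ I1 l1.
  by exists ((2%:R * al - be)^-1 *: u), (S F 0 ((2%:R * al - be)^-1 *: u)).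
have c0 : (- (3 / 8) : F) != 0.
  rewrite oppr_eq0 mulf_eq0 invr_eq0 negb_or n3 /=.
  have -> : (8%:R : F) = 2%:R * 2%:R * 2%:R by rewrite -!natrM.
  by rewrite !mulf_neq0.
have lift : forall n b, exists g, I g /\ low F (K + n) (g - hvec F (HP b (K + n))).
  elim => [|n IH] b.
    rewrite addn0; case: top => g0 [g1 [? ? ? ?]].
    by case: b; [exists g1 | exists g0].
  have [g [Ig lg]] := IH b.
  move: lg; rewrite addnS; set m := (K + n)%N => lg.
  exists ((- (3 / 8))^-1 *: T F g); split; first by apply: IZ; apply: IT.
  have eT : T F g = (- (3 / 8)) *: hvec F (HP b m.+1) +
      ((T F (hvec F (HP b m)) + (3 / 8) *: hvec F (HP b m.+1)) + T F (g - hvec F (HP b m))).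
    rewrite (linB F (T F) (T_lin F)); coefring.
  rewrite (top_scale F _ _ _ _ c0 eT); apply: lowZ; apply: lowD.
    exact: T_P.
  exact: T_low.
pose v := fun i : 'I_(2 * K) => hvec F (HP (odd i) i./2).
have vlow : forall i, low F K (v i).
  by move=> i; apply: low_hvec => /=; rewrite ltn_half_double -mul2n; exact: ltn_ord.
exists v; split.
- by move=> i; exact: low_inJ (vlow i).
- move=> c Ic i.
  set y := \sum_i c i *: v i in Ic.
  have ly : low F K y.
    rewrite /y; apply: (big_ind (low F K)); [exact: low0 | exact: lowD |].
    by move=> j _; apply: lowZ; apply: vlow.
  have y0 : y = 0.
    case: (eqVneq y 0) => // /eqP ynz; exfalso.
    have := xmin y Ic ynz.
    have [h1 _] := jdeg_bounds F x; have [_ h2] := jdeg_bounds F y.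
    have h3 := plevel_of_low _ _ _ ly.
    have h4 : ((plevel y)%:R <= (3 * K)%:R :> rat) by rewrite ler_nat.
    rewrite xlev in h1.
    have h5 : ((3 * K.+1)%N%:R : rat) = (3 * K)%:R + 3%:R by rewrite mulnS natrD addrC.
    rewrite h5 in h1; lra.
  have := congr1 (mcoeff (HP (odd i) i./2)) y0.
  rewrite mcoeff0 /y raddf_sum (bigD1 i) //= mcoeffZ mcoeff_hvec eqxx mulr1 big1 ?addr0 //.
  move=> j ji; rewrite mcoeffZ mcoeff_hvec.
  case: eqP => [[oj hj]|]; last by rewrite mulr0.
  exfalso; move/negP: ji; apply; apply/eqP/val_inj => /=.
  by rewrite -[val j]odd_double_half -[val i]odd_double_half oj hj.
pose Q y := exists c : 'I_(2 * K) -> F, I (y - \sum_i c i *: v i).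
have QI : forall y, I y -> Q y.
  by move=> y Iy; exists (fun _ => 0); rewrite big1 ?subr0 // => i _; rewrite scale0r.
have QD : forall y z, Q y -> Q z -> Q (y + z).
  move=> y1 y2 [c1 h1] [c2 h2]; exists (fun i => c1 i + c2 i).
  rewrite (eq_bigr _ (fun i _ => scalerDl _ _ _)) big_split /= opprD addrACA.
  exact: ID.
have QZ : forall a y, Q y -> Q (a *: y).
  move=> a y [c1 h1]; exists (fun i => a * c1 i).
  have -> : a *: y - \sum_i (a * c1 i) *: v i = a *: (y - \sum_i c1 i *: v i).
    rewrite scalerBr scaler_sumr; congr (_ - _); apply: eq_bigr => i _.
    by rewrite scalerA.
  exact: IZ.
have Qv : forall i, Q (v i).
  move=> i; exists (fun j => (j == i)%:R).
  rewrite (bigD1 i) //= eqxx scale1r big1 ?addr0 ?subrr //.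
  by move=> j /negbTE ->; rewrite scale0r.
have main : forall m y, low F m y -> Q y.
  elim => [|m IH] y ly.
    by rewrite (low0_eq0 _ _ ly); apply: QI.
  have lz' := low_split _ _ _ ly.
  have QP : forall b, Q (hvec F (HP b m)).
    move=> b; case: (ltnP m K) => hm.
      have hi : (b + m.*2 < 2 * K)%N.
        move: hm; clear; case: b => /=; lia.
      have := Qv (Ordinal hi); rewrite /v /=.
      by rewrite oddD odd_double addbF oddb half_bit_double.
    have [g [Ig lg]] := lift (m - K)%N b.
    move: lg; rewrite subnKC // => lg.
    have -> : hvec F (HP b m) = g - (g - hvec F (HP b m)) by rewrite opprB addrC subrK.
    apply: (QD); first exact: QI.
    by rewrite -scaleN1r; apply: (QZ); apply: IH.
  have -> : y = (y - y@_(HP false m) *: hvec F (HP false m) - y@_(HP true m) *: hvec F (HP true m))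
     + (y@_(HP false m) *: hvec F (HP false m) + y@_(HP true m) *: hvec F (HP true m)).
    by coefring.
  apply: (QD); first exact: IH.
  by apply: (QD); apply: (QZ); apply: (QP).
move=> y Jy; apply: (main (plevel y)); apply: low_of_plevel => //.
by rewrite leq_pmull.
Qed.
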